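(* Let $\kappa\geq\aleph_1$ and let $\Omega$ be a complete semiring. The contraction $\mathcal{C}:\mathrm{Trisk}_\Omega(\mathbf{Set}_\kappa)\to\mathrm{Rel}_\Omega(\mathbf{Set}_\kappa)$ is a strict monoidal functor for both monoidal structures, i.e. $\mathcal{C}(T\otimes T')=\mathcal{C}(T)\otimes\mathcal{C}(T')$ and $\mathcal{C}(T\oplus T')=\mathcal{C}(T)\oplus\mathcal{C}(T')$ for all triskells $T,T'$.
   Context: $\mathbf{Set}_\kappa$ is the category of sets of cardinality less than $\kappa$. A complete semiring is a semiring in which sums of arbitrary families are defined. A triskell from $S$ to $T$ with weights in $\Omega$ (using its multiplicative monoid) is a tuple $(E,S,T,\Omega,s,t,w)$ with $s:E\to S$, $t:E\to T$, $w:E\to\Omega$. Composition of $(E,S,T,\Omega,s,t,w)$ and $(E',T,T',\Omega,s',t',w')$ has edge set $\{(e,e')\in E\times E': t(e)=s'(e')\}$, source $s(e)$, target $t'(e')$, weight $w(e)w'(e')$; $\mathrm{Trisk}_\Omega(\mathbf{Set}_\kappa)$ has sets as objects and triskells up to isomorphism as morphisms. On triskells, $T\otimes T'=(E\times E',S\times S',T\times T',\Omega,s\times s',t\times t',(e,e')\mapsto w(e)w'(e'))$ and $T\oplus T'=(E+E',S+S',T+T',\Omega,s+s',t+t',(w,w'))$. $\mathrm{Rel}_\Omega(\mathbf{Set}_\kappa)$ has sets as objects, morphisms $A\to B$ the matrices $M=(m_{a,b})\in\Omega^{A\times B}$, composite of $M:A\to B$ and $N:B\to C$ given by $(a,c)\mapsto\sum_{b\in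 B}m_{a,b}n_{b,c}$, identity matrices as identities; $(M\otimes M')_{(a,a'),(b,b')}=m_{a,b}m'_{a',b'}$ and $M\oplus M'$ is the block-diagonal matrix on $(A+A')\times(B+B')$. The contraction functor $\mathcal{C}$ is the identity on objects and sends a triskell $T=(E,A,B,\Omega,s,t,w)$ to the matrix $\mathcal{C}(T)_{a,b}=\sum_{e\in E,\ s(e)=a,\ t(e)=b}w(e)$. *)

(* Defs.v *)
From mathcomp Require Import all_boot all_algebra.
Set Implicit Arguments. Unset Strict Implicit. Unset Printing Implicit Defensive.
Import GRing.Theory.
Local Open Scope ring_scope.

(* ---------- Cardinals: κ is represented by a set (type) K of cardinality κ ---------- *)
Definition card_lt (A K : Type) : Prop :=
  (exists f : A -> K, injective f) /\ ~ (exists g : K -> A, injective g).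
Definition uncountable (K : Type) : Prop := ~ (exists g : K -> nat, injective g).

Record complete_sum (R : pzSemiRingType) := CompleteSum {
  csum : forall I : Type, (I -> R) -> R;
  csum_empty : forall (I : Type) (f : I -> R), (I -> False) -> csum f = 0;
  csum_single : forall (I : Type) (i0 : I) (f : I -> R),
      (forall i, i = i0) -> csum f = f i0;
  csum_pair : forall f : bool -> R, csum f = f true + f false;
  csum_reindex : forall (I J : Type) (g : I -> J) (f : J -> R),
      bijective g -> csum (fun i => f (g i)) = csum f;
  csum_partition : forall (I : Type) (J : I -> Type) (f : forall i, J i -> R),
      csum (fun p : {i : I & J i} => f (projT1 p) (projT2 p))
      = csum (fun i => csum (f i));
  csum_mull : forall (I : Type) (f : I -> R) (b : R),
      csum f * b = csum (fun i => f i * b);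
  csum_mulr : forall (I : Type) (f : I -> R) (b : R),
      b * csum f = csum (fun i => b * f i)
}.

Record triskell (R : Type) (S T : Type) := Triskell {
  edge : Type;
  src : edge -> S;
  tgt : edge -> T;
  weight : edge -> R
}.
Arguments Triskell {R S T edge}.

Definition trisk_in_Set (K : Type) (R : Type) (S T : Type) (t : triskell R S T) :=
  [/\ card_lt (edge t) K, card_lt S K & card_lt T K].

Definition trisk_tensor (R : pzSemiRingType) (S T S' T' : Type)
  (t : triskell R S T) (t' : triskell R S' T') : triskell R (S * S') (T * T') :=
  @Triskell R (S * S') (T * T') (edge t * edge t')
    (fun e => (src e.1, src e.2)) (fun e => (tgt e.1, tgt e.2))
    (fun e => weight e.1 * weight e.2).

Definition trisk_dsum (R : Type) (S T S' T' : Type)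
  (t : triskell R S T) (t' : triskell R S' T') : triskell R (S + S') (T + T') :=
  @Triskell R (S + S') (T + T') (edge t + edge t')
    (fun e => match e with inl x => inl (src x) | inr y => inr (src y) end)
    (fun e => match e with inl x => inl (tgt x) | inr y => inr (tgt y) end)
    (fun e => match e with inl x => weight x | inr y => weight y end).

Definition rel_tensor (R : pzSemiRingType) (A B A' B' : Type)
  (M : A -> B -> R) (M' : A' -> B' -> R) : (A * A') -> (B * B') -> R :=
  fun a b => M a.1 b.1 * M' a.2 b.2.

Definition rel_dsum (R : pzSemiRingType) (A B A' B' : Type)
  (M : A -> B -> R) (M' : A' -> B' -> R) : (A + A') -> (B + B') -> R :=
  fun a b => match a, b with
             | inl x, inl y => M x y
             | inr x, inr y => M' x y
             | _, _ => 0
             end.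

Definition contraction (R : pzSemiRingType) (cs : complete_sum R) (A B : Type)
  (t : triskell R A B) : A -> B -> R :=
  fun a b => csum cs (fun e : {e : edge t | src e = a /\ tgt e = b} => weight (proj1_sig e)).

(* Main.v *)
Require Import Defs.
From mathcomp Require Import all_boot all_algebra.
From Stdlib Require Import ClassicalEpsilon ProofIrrelevance FunctionalExtensionality.
Import GRing.Theory.
Local Open Scope ring_scope.

Lemma bij_of_inj_surj (I J : Type) (g : I -> J) :
  (forall x y, g x = g y -> x = y) -> (forall z, exists x, g x = z) -> bijective g.
Proof.
move=> inj sur.
exists (fun z => proj1_sig (constructive_indefinite_description _ (sur z))).
- move=> x; apply: inj; exact: proj2_sig (constructive_indefinite_description _ (sur (g x))).
- move=> z; exact: proj2_sig (constructive_indefinite_description _ (sur z)).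
Qed.

Lemma sig_eqI (A : Type) (P : A -> Prop) (x y : {a | P a}) :
  proj1_sig x = proj1_sig y -> x = y.
Proof.
case: x => a pa; case: y => b pb /= eab; subst b.
by rewrite (proof_irrelevance _ pa pb).
Qed.

Theorem theorem14 (K : Type) (hK : uncountable K)
  (R : pzSemiRingType) (cs : complete_sum R)
  (S T S' T' : Type) (t : triskell R S T) (t' : triskell R S' T')
  (ht : trisk_in_Set K t) (ht' : trisk_in_Set K t') :
  contraction cs (trisk_tensor t t') = rel_tensor (contraction cs t) (contraction cs t')
  /\ contraction cs (trisk_dsum t t') = rel_dsum (contraction cs t) (contraction cs t').
Proof.
split.
- apply: functional_extensionality => -[a1 a2].
  apply: functional_extensionality => -[b1 b2].
  rewrite /rel_tensor /contraction /= (csum_mull cs).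
  pose X := {e : edge t | src e = a1 /\ tgt e = b1}.
  pose Y := {e : edge t' | src e = a2 /\ tgt e = b2}.
  rewrite (_ : (fun i : X => weight (proj1_sig i) * _) = fun i : X =>
     csum cs (fun j : Y => weight (proj1_sig i) * weight (proj1_sig j))); last first.
    by apply: functional_extensionality => i; rewrite (csum_mulr cs).
  rewrite -(@csum_partition _ cs X (fun _ : X => Y)
     (fun i j => weight (proj1_sig i) * weight (proj1_sig j))).
  pose Z := {e : edge (trisk_tensor t t') |
       src e = (a1, a2) /\ tgt e = (b1, b2)}.
  have gP : forall p : {i : X & Y},
     @src _ _ _ (trisk_tensor t t') (proj1_sig (projT1 p), proj1_sig (projT2 p)) = (a1, a2) /\
     @tgt _ _ _ (trisk_tensor t t') (proj1_sig (projT1 p), proj1_sig (projT2 p)) = (b1, b2).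
    move=> [[e [h1 h2]] [e' [h3 h4]]] /=; by rewrite h1 h2 h3 h4.
  pose g := fun p : {i : X & Y} => (exist _ _ (gP p) : Z).
  rewrite -(csum_reindex cs (g := g)) //.
  apply: bij_of_inj_surj.
  + move=> [[x1 p1] [y1 q1]] [[x2 p2] [y2 q2]] /= [] ex ey.
    subst x2 y2.
    by rewrite (proof_irrelevance _ p1 p2) (proof_irrelevance _ q1 q2).
  + move=> [[e e'] H].
    have := H; rewrite /= => -[[h1 h3] [h2 h4]].
    have hx : src e = a1 /\ tgt e = b1 by [].
    have hy : src e' = a2 /\ tgt e' = b2 by [].
    exists (existT _ (exist _ e hx : X) (exist _ e' hy : Y)).
    exact: sig_eqI.
- apply: functional_extensionality => a.
  apply: functional_extensionality => b.
  rewrite /rel_dsum /contraction.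
  case: a => [a|a]; case: b => [b|b].
  + pose g := fun x : {e : edge t | src e = a /\ tgt e = b} =>
      (exist (fun e : edge (trisk_dsum t t') => src e = inl a /\ tgt e = inl b)
        (inl (proj1_sig x)) (let: conj h1 h2 := proj2_sig x in
           conj (f_equal inl h1) (f_equal inl h2))).
    rewrite -(csum_reindex cs (g := g)) //.
    apply: bij_of_inj_surj.
    * move=> x y [] h; exact: sig_eqI.
    * move=> [[e|e] H]; have := H; rewrite /= => -[h1 h2]; last by [].
      case: h1 => h1; case: h2 => h2.
      exists (exist _ e (conj h1 h2)); exact: sig_eqI.
  + apply: csum_empty => -[[e|e] /= [h1 h2]] //.
  + apply: csum_empty => -[[e|e] /= [h1 h2]] //.
  + pose g := fun x : {e : edge t' | src e = a /\ tgt e = b} =>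
      (exist (fun e : edge (trisk_dsum t t') => src e = inr a /\ tgt e = inr b)
        (inr (proj1_sig x)) (let: conj h1 h2 := proj2_sig x in
           conj (f_equal inr h1) (f_equal inr h2))).
    rewrite -(csum_reindex cs (g := g)) //.
    apply: bij_of_inj_surj.
    * move=> x y [] h; exact: sig_eqI.
    * move=> [[e|e] H]; have := H; rewrite /= => -[h1 h2]; first by [].
      case: h1 => h1; case: h2 => h2.
      exists (exist _ e (conj h1 h2)); exact: sig_eqI.
Qed.
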